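(* Let $(W,S)$ be a Coxeter system with $S=D$ finite and $W$ infinite. For each $X\subsetneq D$ write $\varepsilon(X)/W_X(t)$ as an irreducible fraction of polynomials with monic denominator. Then the least common multiple of all these denominators (over all $X\subsetneq D$, with $W_X$ finite or infinite) equals $\mathrm{Virg}(D)$, the monic least common multiple of the polynomials $W_X(t)$ over $X\subsetneq D$ with $W_X$ finite.
   Context: $\varepsilon(X)=(-1)^{|X|}$. For $X\subseteq S$, $W_X$ is the special subgroup generated by $X$ and $W_X(t)=\sum_{g\in W_X}t^{l(g)}$ its Poincaré series (a rational function; a polynomial, monic with constant term $1$, when $W_X$ is finite). The empty set gives $W_\emptyset(t)=1$. *)

(* Defs.v *)
From Stdlib Require Import ClassicalEpsilon.
From HB Require Import structures.
From mathcomp Require Import all_boot all_order all_algebra.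
Set Implicit Arguments. Unset Strict Implicit. Unset Printing Implicit Defensive.
Import Order.TTheory GRing.Theory Num.Theory.
Local Open Scope ring_scope.

Definition pb (P : Prop) : bool := if excluded_middle_informative P then true else false.

Section Coxeter.
Variable T : finType.
Variable m : T -> T -> nat.      (* Coxeter matrix; 0 encodes m(s,t) = infinity *)

Definition coxeter_matrix : Prop :=
  (forall s, m s s = 1%N :> nat) /\ (forall s t, m s t = m t s) /\
  (forall s t, s != t -> m s t != 1%N :> nat).

Fixpoint alt (s t : T) (k : nat) : seq T :=
  if k is k'.+1 then s :: alt t s k' else [::].

(* Equality in W = <S | s^2 = 1, (st)^{m(s,t)} = 1> of the elements represented
   by two words (monoid presentation: s s = 1 and the braid relations). *)
Inductive coxeq : seq T -> seq T -> Prop :=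
| coxeq_refl w : coxeq w w
| coxeq_sym u v : coxeq u v -> coxeq v u
| coxeq_trans u v w : coxeq u v -> coxeq v w -> coxeq u w
| coxeq_sq u v s : coxeq (u ++ [:: s; s] ++ v) (u ++ v)
| coxeq_braid u v s t : (0 < m s t)%N ->
    coxeq (u ++ alt s t (m s t) ++ v) (u ++ alt t s (m s t) ++ v).

Definition reduced (w : seq T) : Prop := forall v, coxeq w v -> (size w <= size v)%N.

Definition inWX (X : {set T}) (w : seq T) : Prop :=
  exists v, coxeq w v /\ all (mem X) v.

(* a X n = #{ g in W_X : l(g) = n }, counted as the number of distinct
   elements represented by reduced words of length n lying in W_X. *)
Definition growth (X : {set T}) (n : nat) : nat :=
  #|[set [set v : n.-tuple T | pb (coxeq (tval w) (tval v))]
     | w in [set w : n.-tuple T | pb (reduced (tval w) /\ inWX X (tval w))]]|.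

Definition WX_finite (X : {set T}) : Prop :=
  exists s : seq (seq T), forall w, inWX X w -> exists2 v, v \in s & coxeq w v.

Definition poincare_poly (X : {set T}) (P : {poly rat}) : Prop :=
  forall i, P`_i = (growth X i)%:R.

Definition eps (X : {set T}) : rat := (-1) ^+ #|X|.

(* eps(X)/W_X(t) = p/q as formal power series, i.e. eps(X) * q = p * W_X(t) *)
Definition fraction_eq (X : {set T}) (p q : {poly rat}) : Prop :=
  forall n, eps X * q`_n = \sum_(i < n.+1) p`_i * (growth X (n - i))%:R.

Definition irred_denom (X : {set T}) (q : {poly rat}) : Prop :=
  exists p : {poly rat}, [/\ q \is monic, coprimep p q & fraction_eq X p q].

End Coxeter.

Definition is_monic_lcm (F : {poly rat} -> Prop) (L : {poly rat}) : Prop :=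
  [/\ L \is monic, (forall p, F p -> p %| L) &
      (forall M, (forall p, F p -> p %| M) -> L %| M)].

Definition Virg (T : finType) (m : T -> T -> nat) (L : {poly rat}) : Prop :=
  is_monic_lcm (fun P => exists X : {set T},
                  [/\ X \proper [set: T], WX_finite m X & poincare_poly m X P]) L.

(* Main.v *)
Require Import Defs.
From Stdlib Require Import ClassicalEpsilon FunctionalExtensionality PropExtensionality Classical.
From Stdlib Require Import Reals Lra Lia.
From HB Require Import structures.
From mathcomp Require Import all_boot all_order all_algebra.
Set Implicit Arguments. Unset Strict Implicit. Unset Printing Implicit Defensive.

Section Words.
Variable T : finType.
Variable m : T -> T -> nat.
Notation coxeq := (coxeq m).

Lemma coxeq_catl a u v : coxeq u v -> coxeq (a ++ u) (a ++ v).
Proof.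
elim=> {u v}.
- by move=> w; apply: coxeq_refl.
- by move=> u v _ IH; apply: coxeq_sym.
- by move=> u v w _ IH1 _ IH2; apply: coxeq_trans IH2.
- move=> u v s; have := coxeq_sq m (a ++ u) v s; by rewrite -!catA.
- move=> u v s t H; have := coxeq_braid (a ++ u) v H; by rewrite -!catA.
Qed.

Lemma coxeq_catr b u v : coxeq u v -> coxeq (u ++ b) (v ++ b).
Proof.
elim=> {u v}.
- by move=> w; apply: coxeq_refl.
- by move=> u v _ IH; apply: coxeq_sym.
- by move=> u v w _ IH1 _ IH2; apply: coxeq_trans IH2.
- move=> u v s; have := coxeq_sq m u (v ++ b) s; by rewrite -!catA.
- move=> u v s t H; have := coxeq_braid u (v ++ b) H; by rewrite -!catA.
Qed.

Lemma coxeq_cat u u' v v' : coxeq u u' -> coxeq v v' -> coxeq (u ++ v) (u' ++ v').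
Proof.
move=> H1 H2; apply: coxeq_trans (coxeq_catr v H1) _; exact: coxeq_catl.
Qed.

Lemma coxeq_rev_cancel w : coxeq (w ++ rev w) [::].
Proof.
elim: w => [|a w IH] /=; first exact: coxeq_refl.
have -> : a :: w ++ rev (a :: w) = [:: a] ++ (w ++ rev w) ++ [:: a].
  by rewrite rev_cons -cats1 catA.
apply: coxeq_trans (coxeq_catl _ (coxeq_catr _ IH)) _ => /=.
have := @coxeq_sq _ m [::] [::] a; rewrite /= => H; exact: H.
Qed.

Lemma coxeq_rev_cancel' w : coxeq (rev w ++ w) [::].
Proof. by have := coxeq_rev_cancel (rev w); rewrite revK. Qed.

Lemma size_alt (s t : T) k : size (alt s t k) = k.
Proof. by elim: k s t => //= k IH s t; rewrite IH. Qed.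

Lemma coxeq_size_odd u v : coxeq u v -> odd (size u) = odd (size v).
Proof.
elim=> //.
- by move=> u0 v0 w _ -> _ ->.
- by move=> u0 v0 s; rewrite !size_cat /= !addnS /= negbK.
- by move=> u0 v0 s t _; rewrite !size_cat !size_alt.
Qed.

Definition lenP (w : seq T) (n : nat) : bool := pb (exists v, coxeq w v /\ size v = n).
Lemma lenP_ex w : exists n, lenP w n.
Proof. exists (size w); rewrite /lenP /pb; case: excluded_middle_informative => // [[]].
by exists w; split; [apply: coxeq_refl|]. Qed.
Definition len w := ex_minn (lenP_ex w).

Lemma pbP (P : Prop) : reflect P (pb P).
Proof. by rewrite /pb; case: excluded_middle_informative => H; constructor. Qed.

Lemma len_spec w : exists v, coxeq w v /\ size v = len w.
Proof. rewrite /len; case: ex_minnP => n /pbP H _; exact: H. Qed.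

Lemma len_min w v : coxeq w v -> len w <= size v.
Proof. move=> H; rewrite /len; case: ex_minnP => n _ Hm; apply: Hm; apply/pbP; by exists v. Qed.

Lemma len_coxeq u v : coxeq u v -> len u = len v.
Proof.
move=> H; apply/eqP; rewrite eqn_leq; apply/andP; split.
- have [w [H1 H2]] := len_spec v; rewrite -H2; apply: len_min; exact: coxeq_trans H1.
- have [w [H1 H2]] := len_spec u; rewrite -H2; apply: len_min; apply: coxeq_trans H1; exact: coxeq_sym.
Qed.

Lemma len_size w : len w <= size w.
Proof. apply: len_min; exact: coxeq_refl. Qed.

Lemma len_odd w : odd (len w) = odd (size w).
Proof. have [v [H1 H2]] := len_spec w; by rewrite -H2 (coxeq_size_odd H1). Qed.

Lemma len_cat u v : len (u ++ v) <= len u + len v.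
Proof.
have [u' [H1 H2]] := len_spec u; have [v' [H3 H4]] := len_spec v.
rewrite -H2 -H4 -size_cat; apply: len_min; exact: coxeq_cat.
Qed.

Lemma len_nil : len [::] = 0.
Proof. apply/eqP; rewrite -leqn0; exact: len_size. Qed.

Lemma len0 w : len w = 0 -> coxeq w [::].
Proof. have [v [H1 H2]] := len_spec w => H; rewrite H in H2; by move/size0nil: H2 => <-. Qed.

Lemma len_rev w : len (rev w) = len w.
Proof.
suff H : forall w, len (rev w) <= len w.
  by apply/eqP; rewrite eqn_leq H /=; have := H (rev w); rewrite revK.
move=> {}w; have [v [H1 H2]] := len_spec w; rewrite -H2 -size_rev; apply: len_min.
have : coxeq (rev w) (rev w ++ (v ++ rev v)).
  rewrite -{1}(cats0 (rev w)); apply: coxeq_catl; apply: coxeq_sym; exact: coxeq_rev_cancel.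
move=> Ha; apply: coxeq_trans Ha _; rewrite catA.
have E : coxeq (rev w ++ v) [::].
  apply: coxeq_trans (coxeq_catl _ (coxeq_sym H1)) _; exact: coxeq_rev_cancel'.
exact: (coxeq_catr (rev v) E).
Qed.

Lemma len_s_ne w s : len (w ++ [:: s]) != len w.
Proof.
apply/negP=> /eqP H; have := len_odd (w ++ [:: s]); rewrite H len_odd size_cat /=.
by rewrite addn1 /=; case: (odd (size w)).
Qed.

Lemma len_s_le w s : len (w ++ [:: s]) <= (len w).+1.
Proof. apply: leq_trans (len_cat _ _) _; rewrite -addn1 leq_add2l; exact: len_size. Qed.

Lemma len_s_ge w s : (len w) <= (len (w ++ [:: s])).+1.
Proof.
have H : coxeq w ((w ++ [:: s]) ++ [:: s]).
  rewrite -catA /=. have := @coxeq_sq _ m w [::] s; rewrite !cats0 => H0; exact: coxeq_sym H0.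
rewrite (len_coxeq H); exact: len_s_le.
Qed.

Lemma len_s w s : len (w ++ [:: s]) = (len w).+1 \/ (len (w ++ [:: s])).+1 = len w.
Proof.
have H1 := len_s_ne w s; have H2 := len_s_le w s; have H3 := len_s_ge w s.
case: (ltngtP (len (w ++ [:: s])) (len w)) => H.
- right; apply/eqP; rewrite eqn_leq H H3; by [].
- left; apply/eqP; rewrite eqn_leq H2; by [].
- by rewrite H eqxx in H1.
Qed.

End Words.

Section Geo.
Variable T : finType.
Variable m : T -> T -> nat.
Hypothesis hm : coxeter_matrix m.
Local Open Scope R_scope.

Definition vec := T -> R.
Definition sumv (f : T -> R) : R := List.fold_right (fun r acc => f r + acc) 0 (enum T).

Lemma sumv_add f g : sumv (fun r => f r + g r) = sumv f + sumv g.
Proof. rewrite /sumv; elim: (enum T) => /= [|a l ->]; lra. Qed.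
Lemma sumv_scale k f : sumv (fun r => k * f r) = k * sumv f.
Proof. rewrite /sumv; elim: (enum T) => /= [|a l ->]; lra. Qed.

Definition alpha (s : T) : vec := fun r => if r == s then 1 else 0.

Lemma sumv_alpha g q : sumv (fun r => g r * alpha q r) = g q.
Proof.
rewrite /sumv; have : q \in enum T by rewrite mem_enum.
have : uniq (enum T) by apply: enum_uniq.
elim: (enum T) => //= a l IH /andP [Ha Hu]; rewrite in_cons => /orP [/eqP ->|Hq].
- rewrite /alpha eqxx.
  suff -> : List.fold_right (fun r acc => g r * (if r == a then 1 else 0) + acc) 0 l = 0 by lra.
  clear IH Hu; elim: l Ha => //= b l IH2; rewrite in_cons negb_or => /andP [Hb Hl].
  rewrite IH2 //; rewrite eq_sym in Hb; rewrite (negbTE Hb); lra.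
- rewrite IH // /alpha; have -> : (a == q) = false.
    by apply/negP => /eqP E; rewrite E Hq in Ha.
  lra.
Qed.

Definition cst (s t : T) : R := if m s t == 0%N then 1 else cos (PI / INR (m s t)).
Definition Bm (s t : T) : R := if s == t then 1 else - cst s t.
Definition phi (s : T) (x : vec) : R := sumv (fun r => Bm s r * x r).
Definition sigma (s : T) (x : vec) : vec := fun r => x r - 2 * phi s x * alpha s r.
Definition act (w : seq T) (x : vec) : vec := foldr sigma x w.

Definition vadd (x y : vec) : vec := fun r => x r + y r.
Definition vscale (k : R) (x : vec) : vec := fun r => k * x r.

Lemma phi_add s x y : phi s (vadd x y) = phi s x + phi s y.
Proof. rewrite /phi -sumv_add; congr sumv; apply: functional_extensionality => r; rewrite /vadd; lra. Qed.
Lemma phi_scale s k x : phi s (vscale k x) = k * phi s x.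
Proof. rewrite /phi -sumv_scale; congr sumv; apply: functional_extensionality => r; rewrite /vscale; lra. Qed.
Lemma phi_alpha s q : phi s (alpha q) = Bm s q.
Proof. rewrite /phi; exact: sumv_alpha. Qed.

Lemma sigma_add s x y : sigma s (vadd x y) = vadd (sigma s x) (sigma s y).
Proof. apply: functional_extensionality => r; rewrite /sigma phi_add /vadd; lra. Qed.
Lemma sigma_scale s k x : sigma s (vscale k x) = vscale k (sigma s x).
Proof. apply: functional_extensionality => r; rewrite /sigma phi_scale /vscale; lra. Qed.
Lemma act_add w x y : act w (vadd x y) = vadd (act w x) (act w y).
Proof. by elim: w => //= a w ->; rewrite sigma_add. Qed.
Lemma act_scale w k x : act w (vscale k x) = vscale k (act w x).
Proof. by elim: w => //= a w ->; rewrite sigma_scale. Qed.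
Lemma act_cat u v x : act (u ++ v) x = act u (act v x).
Proof. by rewrite /act foldr_cat. Qed.

Lemma Bm_ss s : Bm s s = 1.
Proof. by rewrite /Bm eqxx. Qed.

Lemma sigma_sigma s x : sigma s (sigma s x) = x.
Proof.
apply: functional_extensionality => r.
have E : phi s (sigma s x) = - phi s x.
  have -> : sigma s x = vadd x (vscale (- 2 * phi s x) (alpha s)).
    apply: functional_extensionality => q; rewrite /sigma /vadd /vscale; lra.
  rewrite phi_add phi_scale phi_alpha Bm_ss; lra.
rewrite /sigma E; rewrite /sigma; lra.
Qed.

Lemma act_rev_cancel w x : act (rev w) (act w x) = x.
Proof.
elim: w x => //= a w IH x; rewrite rev_cons -cats1 act_cat /= sigma_sigma; exact: IH.
Qed.

Lemma sigma_fix s x : phi s x = 0 -> sigma s x = x.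
Proof. move=> H; apply: functional_extensionality => r; rewrite /sigma H; lra. Qed.

Lemma cst_sym s t : cst s t = cst t s.
Proof. case: hm => _ [Hs _]; by rewrite /cst Hs. Qed.

Lemma Bm_st s t : s != t -> Bm s t = - cst s t.
Proof. by rewrite /Bm => /negbTE ->. Qed.

Fixpoint Aseq (c : R) (k : nat) : R * R :=
  if k is k'.+1 then let (a, b) := Aseq c k' in (b, 2 * c * b - a) else (0, 1).
Definition A c k := fst (Aseq c k).
Lemma A0 c : A c 0 = 0. Proof. by []. Qed.
Lemma A1 c : A c 1 = 1. Proof. by []. Qed.
Lemma ARec c k : A c k.+2 = 2 * c * A c k.+1 - A c k.
Proof. rewrite /A /=; by case: (Aseq c k). Qed.

Lemma A_inf k : A 1 k = INR k.
Proof.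
suff H : A 1 k = INR k /\ A 1 k.+1 = INR k.+1 by case: H.
elim: k => [|k [IH1 IH2]]; first by rewrite /A /=; split; lra.
split => //; rewrite ARec IH1 IH2 !S_INR; lra.
Qed.

Lemma A_sin (th : R) k : sin th <> 0 -> A (cos th) k = sin (INR k * th) / sin th.
Proof.
move=> Hs.
suff H : A (cos th) k = sin (INR k * th) / sin th /\
         A (cos th) k.+1 = sin (INR k.+1 * th) / sin th by case: H.
elim: k => [|k [IH1 IH2]].
  rewrite /A /= Rmult_0_l sin_0 Rmult_1_l; split; field; exact: Hs.
split => //; rewrite ARec IH1 IH2.
have E1 : INR k.+2 * th = INR k.+1 * th + th by rewrite !S_INR; lra.
have E2 : INR k * th = INR k.+1 * th - th by rewrite !S_INR; lra.
rewrite E1 E2 sin_plus sin_minus; field; exact: Hs.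
Qed.


Lemma mst_ge2 s t : s != t -> m s t <> 0%N -> (2 <= m s t)%N.
Proof.
case: hm => _ [_ H] st m0; have := H s t st; case: (m s t) m0 => [//|[//|k]] _ _ //.
Qed.

Lemma theta_pos s t : s != t -> m s t <> 0%N ->
  0 < PI / INR (m s t) < PI.
Proof.
move=> st m0; have H2 := mst_ge2 st m0.
have HM : 2 <= INR (m s t) by have := le_INR 2 (m s t) (ssrnat.leP H2); rewrite /= ; lra.
have Hpi := PI_RGT_0.
split; first by apply: Rdiv_lt_0_compat; lra.
apply: (Rmult_lt_reg_r (INR (m s t))); first lra.
rewrite /Rdiv Rmult_assoc Rinv_l; last lra.
nra.
Qed.

Lemma cst_sin s t : s != t -> m s t <> 0%N -> cst s t = cos (PI / INR (m s t)).
Proof. by move=> _ m0; rewrite /cst; move/eqP/negbTE: m0 => ->. Qed.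

Lemma A_pos s t k : s != t -> (m s t = 0%N \/ (k <= m s t)%N) -> 0 <= A (cst s t) k.
Proof.
move=> st; case: (m s t =P 0%N) => [m0 _|m0 [//|Hk]].
  rewrite /cst m0 /= A_inf; exact: pos_INR.
have [H1 H2] := theta_pos st m0; rewrite cst_sin // A_sin; last first.
  by have := sin_gt_0 _ H1 H2; lra.
apply: Rmult_le_pos; last by apply: Rlt_le; apply: Rinv_0_lt_compat; exact: sin_gt_0.
apply: sin_ge_0.
  apply: Rmult_le_pos; [exact: pos_INR| lra].
have HM : INR k <= INR (m s t) by apply: le_INR; apply/ssrnat.leP.
have HMp : 0 < INR (m s t) by have := le_INR 2 (m s t) (ssrnat.leP (mst_ge2 st m0)); rewrite /=; lra.
have -> : INR k * (PI / INR (m s t)) = PI * (INR k / INR (m s t)) by field; lra.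
have : INR k / INR (m s t) <= 1.
  apply: (Rmult_le_reg_r (INR (m s t))) => //; rewrite /Rdiv Rmult_assoc Rinv_l; lra.
have Hpi := PI_RGT_0; move=> H; nra.
Qed.

Lemma A_period s t : s != t -> m s t <> 0%N ->
  A (cst s t) (2 * m s t) = 0 /\ A (cst s t) (2 * m s t).+1 = 1.
Proof.
move=> st m0; have [H1 H2] := theta_pos st m0.
have Hs : sin (PI / INR (m s t)) > 0 by exact: sin_gt_0.
have HMp : 0 < INR (m s t) by have := le_INR 2 (m s t) (ssrnat.leP (mst_ge2 st m0)); rewrite /=; lra.
rewrite cst_sin // !A_sin; try lra.
have E : INR (2 * m s t) * (PI / INR (m s t)) = 2 * INR 1 * PI.
  rewrite mult_INR /=; field; lra.
split.
- rewrite E; have := sin_period 0 1; rewrite Rplus_0_l sin_0 => ->; lra.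
- rewrite S_INR Rmult_plus_distr_r E Rmult_1_l Rplus_comm sin_period; field; lra.
Qed.

Lemma phi_comb y a p b q :
  phi y (fun r => a * alpha p r + b * alpha q r) = a * Bm y p + b * Bm y q.
Proof.
have -> : (fun r => a * alpha p r + b * alpha q r) = vadd (vscale a (alpha p)) (vscale b (alpha q)) by [].
by rewrite phi_add !phi_scale !phi_alpha.
Qed.

Definition ew (s t : T) k := alt (if odd k then t else s) (if odd k then s else t) k.
Lemma ewS s t k : ew s t k.+1 = (if odd k then s else t) :: ew s t k.
Proof. by rewrite /ew /=; case: (odd k). Qed.

Lemma act_ew s t k : s != t ->
  act (ew s t k) (alpha s) = fun r => A (cst s t) k.+1 * alpha (if odd k then t else s) r
                                      + A (cst s t) k * alpha (if odd k then s else t) r.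
Proof.
move=> st; have ts : t != s by rewrite eq_sym.
have Bst : Bm s t = - cst s t by rewrite Bm_st.
have Bts : Bm t s = - cst s t by rewrite Bm_st // cst_sym.
elim: k => [|k IH].
  rewrite /ew /=; apply: functional_extensionality => r; rewrite /A /=; lra.
rewrite ewS /= IH; apply: functional_extensionality => r.
rewrite /sigma; case: (odd k) => /=; rewrite phi_comb !Bm_ss ?Bst ?Bts ARec; ring.
Qed.

Lemma alt_rcons (x y : T) k : alt x y k.+1 = rcons (alt x y k) (if odd k then y else x).
Proof. by elim: k x y => //= k IH x y; rewrite IH; case: (odd k). Qed.

Lemma rev_alt (s t : T) k : rev (alt t s k) = alt (if odd k then t else s) (if odd k then s else t) k.
Proof.
elim: k s t => // k IH s t. rewrite alt_rcons rev_rcons IH /=; by case: (odd k).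
Qed.

Lemma alt_cat (s t : T) k j : alt s t (k + j) = alt s t k ++ alt (if odd k then t else s) (if odd k then s else t) j.
Proof. by elim: k s t => //= k IH s t; rewrite IH; case: (odd k). Qed.

Lemma mem_alt (s t r : T) k : r \in alt s t k -> r = s \/ r = t.
Proof.
elim: k s t => //= k IH s t; rewrite in_cons => /orP [/eqP ->|/IH [] ->]; tauto.
Qed.

Lemma act_fix w z : (forall r, r \in w -> phi r z = 0) -> act w z = z.
Proof.
elim: w => //= a w IH H; rewrite IH; first by apply: sigma_fix; apply: H; rewrite in_cons eqxx.
move=> r Hr; apply: H; by rewrite in_cons Hr orbT.
Qed.

Lemma act_alt2m s t x : s != t -> m s t <> 0%N -> act (alt s t (2 * m s t)) x = x.
Proof.
move=> st m0; have ts : t != s by rewrite eq_sym.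
have [H1 H2] := theta_pos st m0.
have Hs : sin (PI / INR (m s t)) > 0 by exact: sin_gt_0.
set c := cst s t.
have Hc : 1 - c * c <> 0.
  rewrite /c cst_sin //; have := sin2_cos2 (PI / INR (m s t)); rewrite /Rsqr; nra.
have Bst : Bm s t = - c by rewrite Bm_st.
have Bts : Bm t s = - c by rewrite Bm_st // cst_sym.
set P := phi s x; set Q := phi t x.
set a := (P + c * Q) / (1 - c * c); set b := (Q + c * P) / (1 - c * c).
set z := vadd x (vadd (vscale (- a) (alpha s)) (vscale (- b) (alpha t))).
have Ex : x = vadd z (vadd (vscale a (alpha s)) (vscale b (alpha t))).
  apply: functional_extensionality => r; rewrite /z /vadd /vscale; ring.
have Hz : act (alt s t (2 * m s t)) z = z.
  apply: act_fix => r /mem_alt [] ->; rewrite /z !phi_add !phi_scale !phi_alpha !Bm_ss ?Bst ?Bts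
    -/P -/Q /a /b; field; exact: Hc.
have Es : act (alt s t (2 * m s t)) (alpha s) = alpha s.
  have := act_ew (2 * m s t) st; rewrite /ew (_ : odd (2 * m s t) = false) /=; last by rewrite mul2n odd_double.
  move=> ->.
  have [E0 E1] := A_period st m0; rewrite -/c in E0 E1; rewrite E0 E1.
  apply: functional_extensionality => r; ring.
have Et : act (alt s t (2 * m s t)) (alpha t) = alpha t.
  have := act_ew (2 * m t s) ts; rewrite /ew (_ : odd (2 * m t s) = false) /=; last by rewrite mul2n odd_double.
  move=> H.
  have [E0 E1] := A_period ts (fun E => m0 (etrans (proj1 (proj2 hm) s t) E)).
  rewrite E0 E1 in H.
  have H' : act (alt t s (2 * m s t)) (alpha t) = alpha t.
    rewrite (proj1 (proj2 hm) s t) H; apply: functional_extensionality => r; ring.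
  have := rev_alt s t (2 * m s t); rewrite (_ : odd (2 * m s t) = false) /=; last by rewrite mul2n odd_double.
  move=> <-.
  rewrite -{1}H'; exact: act_rev_cancel.
clearbody z; by rewrite {1}Ex !act_add !act_scale Hz Es Et -Ex.
Qed.

Lemma act_braid s t x : (0 < m s t)%N -> act (alt s t (m s t)) x = act (alt t s (m s t)) x.
Proof.
move=> Hm; case: (eqVneq s t) => [<-|st] //.
have m0 : m s t <> 0%N by move=> E; rewrite E in Hm.
set M := m s t.
rewrite -{1}(act_rev_cancel (alt t s M) x) -act_cat rev_alt.
have -> : alt s t M ++ alt (if odd M then t else s) (if odd M then s else t) M = alt s t (2 * M).
  by rewrite mul2n -addnn alt_cat.
exact: act_alt2m.
Qed.

Lemma act_coxeq u v : coxeq m u v -> act u = act v.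
Proof.
elim=> // {u v}.
- by move=> u v w _ -> _ ->.
- move=> u v s; apply: functional_extensionality => x; by rewrite !act_cat /= sigma_sigma.
- move=> u v s t H; apply: functional_extensionality => x; by rewrite !act_cat act_braid.
Qed.

End Geo.

Section Root.
Variable T : finType.
Variable m : T -> T -> nat.
Hypothesis hm : coxeter_matrix m.
Local Notation len := (len m).
Local Notation act := (act m).
Local Notation coxeq := (coxeq m).
Local Open Scope R_scope.

Definition pos (x : vec T) := forall r, 0 <= x r.
Definition neg (x : vec T) := forall r, x r <= 0.

Fixpoint noadj (u : seq T) : bool :=
  if u is a :: u' then (if u' is b :: _ then (a != b) && noadj u' else true) else true.

Lemma noadj_dec u : ~~ noadj u -> exists p q a, u = p ++ [:: a; a] ++ q.
Proof.
elim: u => //= a [|b u] IH //; rewrite negb_and negbK => /orP [/eqP <-|H].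
- by exists [::], u, a.
- have [p [q [c E]]] := IH H; exists (a :: p), q, c; by rewrite E.
Qed.

Lemma ew_head (s t : T) k : ew s t k.+1 = (if odd k then s else t) :: ew s t k.
Proof. exact: ewS. Qed.

Lemma size_ew (s t : T) k : size (ew s t k) = k.
Proof. by rewrite /ew size_alt. Qed.

Lemma ew_char (s t : T) u : s != t -> all (fun r => (r == s) || (r == t)) u -> noadj u ->
  last t u = t -> u = ew s t (size u).
Proof.
move=> st; elim: u => //= a u IH /andP [Ha Hall] Hna Hl.
case: u IH Hall Hna Hl => [|b u] IH Hall Hna Hl.
  by rewrite /= in Hl; rewrite Hl.
move: Hna => /andP [ab Hna].
have E := IH Hall Hna Hl.
rewrite /= in E *; rewrite ew_head E ew_head /=.
have Hb : b = (if odd (size u) then s else t) by move: E; rewrite ew_head => -[].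
rewrite Hb in ab; move: Ha ab; case: (odd (size u)) => /= /orP [] /eqP ->; rewrite ?eqxx //.
Qed.

Lemma drop_ew (s t : T) k j : drop j (ew s t k) = ew s t (k - j).
Proof.
elim: j k => [|j IH] k; first by rewrite drop0 subn0.
case: k => [|k]; first by [].
by rewrite ew_head /= IH subSS.
Qed.

Lemma alt_last (x y : T) k : exists r, alt x y k.+1 = r ++ [:: if odd k then y else x].
Proof. by exists (alt x y k); rewrite alt_rcons cats1. Qed.

Lemma pos_comb a b x y : 0 <= a -> 0 <= b -> pos x -> pos y -> pos (fun r => a * x r + b * y r).
Proof. move=> Ha Hb Hx Hy r; have := Hx r; have := Hy r; nra. Qed.

Lemma coxeq_sq_r w s : coxeq ((w ++ [:: s]) ++ [:: s]) w.
Proof. rewrite -catA /=; have := coxeq_sq m w [::] s; by rewrite !cats0. Qed.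

Lemma len_asc_eq w s : (len w < len (w ++ [:: s]))%N -> len (w ++ [:: s]) = (len w).+1.
Proof. by case: (len_s m w s) => // <-; rewrite ltnNge leqnSn. Qed.

Lemma len_desc_eq w s : ~~ (len w < len (w ++ [:: s]))%N -> (len (w ++ [:: s])).+1 = len w.
Proof. by case: (len_s m w s) => // ->; rewrite leqnn. Qed.

Theorem root_pos n : forall w s, len w = n -> (len w < len (w ++ [:: s]))%N -> pos (act w (alpha s)).
Proof.
elim/ltn_ind: n => n IHn w s Hn Hasc.
have [v [Hwv Hv]] := len_spec m w.
have Hvs : len (v ++ [:: s]) = n.+1.
  rewrite -(len_coxeq (coxeq_catr [:: s] Hwv)) -Hn; exact: len_asc_eq.
rewrite (act_coxeq hm Hwv).
case: (lastP v) Hv Hwv Hvs => [|v' t] Hv Hwv Hvs.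
  by move=> r; rewrite /= /alpha; case: (r == s); lra.
rewrite Hn size_rcons in Hv.
have Hlv : len (rcons v' t) = n by rewrite -(len_coxeq Hwv).
have Hlv' : len v' = n.-1.
  apply/eqP; rewrite eqn_leq; apply/andP; split.
    by rewrite -Hv /=; exact: len_size.
  have := len_cat m v' [:: t]; rewrite cats1 Hlv => H.
  have : (len [:: t] <= 1)%N by exact: (len_size m [:: t]).
  rewrite -Hv /= in H *; move=> H1; rewrite -ltnS; apply: leq_trans H _; by rewrite -addn1 leq_add2l.
have st : s != t.
  apply/negP=> /eqP E; rewrite E in Hvs.
  have := len_coxeq (coxeq_sq_r v' t); rewrite -cats1 in Hvs; rewrite Hvs Hlv' -Hv /= => E2.
  move: E2; clear; move=> E2; lia.
pose Ain x := exists u, [/\ all (fun r => (r == s) || (r == t)) u, coxeq (x ++ u) (rcons v' t) & (len x + size u)%N = n].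
have Aex : exists k, pb (exists x, Ain x /\ len x = k).
  exists (len v'); apply/pbP; exists v'; split => //; exists [:: t]; split.
  - by rewrite /= eqxx orbT.
  - rewrite cats1; exact: coxeq_refl.
  - by rewrite Hlv' addn1 -Hv.
case: (ex_minnP Aex) => k /pbP [x [[u [Hu Hxu Hsz]] Hk]] Hmin.
have Hmin' : forall x', Ain x' -> (len x <= len x')%N.
  move=> x' H; rewrite Hk; apply: Hmin; apply/pbP; by exists x'.
have Hxn : (len x < n)%N.
  have := Hmin' v'; rewrite Hlv' -Hv /= => H; apply: leq_ltn_trans (H _) _ => //.
  exists [:: t]; split; [by rewrite /= eqxx orbT | rewrite cats1; exact: coxeq_refl | by rewrite Hlv' addn1 -Hv].
have Hbound : forall u'', coxeq (x ++ u'') (rcons v' t) -> (n <= len x + size u'')%N.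
  move=> u'' H; rewrite -Hlv -(len_coxeq H); apply: leq_trans (len_cat _ _ _) _.
  by rewrite leq_add2l; exact: len_size.
have Hxasc : forall r, (r == s) || (r == t) -> (len x < len (x ++ [:: r]))%N.
  move=> r Hr; apply/negPn/negP => Hd; have Hd' := len_desc_eq Hd.
  have : Ain (x ++ [:: r]).
    exists (r :: u); split; first by rewrite /= Hr.
    - apply: coxeq_trans Hxu; rewrite -catA /=.
      have := coxeq_sq m x u r; by rewrite /=.
    - by rewrite /= addnS -addSn Hd'.
  move/Hmin'; rewrite -Hd'; by rewrite ltnn.
have HU1 : forall u'', coxeq u'' u -> (size u <= size u'')%N.
  move=> u'' H; rewrite -(leq_add2l (len x)) Hsz; apply: Hbound.
  apply: coxeq_trans Hxu; exact: coxeq_catl.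
have HU2 : forall u'', coxeq u'' (u ++ [:: s]) -> (size u < size u'')%N.
  move=> u'' H; rewrite ltnNge; apply/negP => Hle.
  have Hpar := coxeq_size_odd H; rewrite size_cat /= addn1 /= in Hpar.
  have Hlt : (size u'' < size u)%N.
    rewrite ltn_neqAle Hle andbT; apply/negP => /eqP E; rewrite E in Hpar.
    by case: (odd (size u)) Hpar.
  have H1 : coxeq (rcons v' t ++ [:: s]) (x ++ u'').
    apply: coxeq_trans (coxeq_catr _ (coxeq_sym Hxu)) _; rewrite -catA.
    apply: coxeq_catl; exact: coxeq_sym H.
  have H2 : (n.+1 <= len x + size u'')%N.
    rewrite -Hvs (len_coxeq H1); apply: leq_trans (len_cat _ _ _) _; rewrite leq_add2l; exact: len_size.
  have : (n.+1 < len x + size u)%N.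
    apply: leq_ltn_trans H2 _; by rewrite ltn_add2l.
  by rewrite Hsz ltnNge leqnSn.
have Hna : noadj u.
  apply/negPn/negP => /noadj_dec [p [q [a E]]].
  have := HU1 (p ++ q); rewrite E !size_cat /= => H.
  have : (size p + (size q).+2 <= size p + size q)%N.
    apply: H; apply: coxeq_sym; exact: coxeq_sq.
  by rewrite leq_add2l ltnNge leqnSn.
have Hlast : last t u = t.
  case: (lastP u) Hu HU2 => [//|u0 a] Hu HU2; rewrite last_rcons.
  have Ha : (a == s) || (a == t) by move: Hu; rewrite all_rcons => /andP [].
  case/orP: Ha => /eqP Ha //; rewrite Ha in HU2.
  exfalso; have H : (size (rcons u0 s) < size u0)%N.
    apply: HU2; apply: coxeq_sym; rewrite -cats1 -catA /=; have := coxeq_sq m u0 [::] s; by rewrite !cats0.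
  by move: H; rewrite size_rcons ltnNge leqnSn.
have Hew := ew_char st Hu Hna Hlast.
set k0 := size u in Hew.
have Hk0 : m s t = 0%N \/ (k0 < m s t)%N.
  case: (m s t =P 0%N) => [|m0]; first by left.
  right; rewrite ltnNge; apply/negP => HM.
  set M := m s t in HM m0.
  have Eu : u = take (k0 - M) u ++ ew s t M.
    rewrite -{1}(cat_take_drop (k0 - M) u); congr (_ ++ _).
    by rewrite {1}Hew drop_ew subKn.
  have HMp : (0 < M)%N by rewrite lt0n; apply/eqP.
  have Ebr : coxeq (ew s t M) (alt (if odd M then s else t) (if odd M then t else s) M).
    rewrite /ew.
    have Hm' : m (if odd M then t else s) (if odd M then s else t) = M.
      by case: (odd M); rewrite // (proj1 (proj2 hm)).
    have H := @coxeq_braid T m [::] [::] (if odd M then t else s) (if odd M then s else t).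
    rewrite Hm' /= !cats0 in H; exact: H.
  case: M HMp HM m0 Eu Ebr => [//|M'] _ HM m0 Eu Ebr.
  have [r Er] := alt_last (if odd M'.+1 then s else t) (if odd M'.+1 then t else s) M'.
  have Elast : (if odd M' then if odd M'.+1 then t else s else if odd M'.+1 then s else t) = s.
    by rewrite /=; case: (odd M').
  rewrite Elast in Er; rewrite Er in Ebr.
  have := HU2 (take (k0 - M'.+1) u ++ r).
  have Hsz2 : size (take (k0 - M'.+1) u ++ r) = k0.-1.
    have := congr1 size Eu; rewrite size_cat size_ew => E1.
    have := congr1 size Er; rewrite size_alt size_cat /= addn1 => E2.
    case: E2 => E2; rewrite size_cat; move: (size (take (k0 - M'.+1) u)) E1 => j E1; by rewrite /k0 E1 addnS /= E2.
  rewrite Hsz2 -/k0 => H; have : (k0 < k0.-1)%N.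
    apply: H; rewrite {2}Eu -catA; apply: coxeq_sym.
    apply: coxeq_trans (coxeq_catl _ (coxeq_catr [:: s] Ebr)) _.
    apply: coxeq_catl; exact: coxeq_sq_r.
  by case: (k0) => // k1; rewrite ltnNge leqnSn.
have Hxw : act (rcons v' t) (alpha s) = act x (act u (alpha s)).
  by rewrite -act_cat (act_coxeq hm (coxeq_sym Hxu)).
rewrite Hxw Hew act_ew //.
have Hp1 : 0 <= A (cst m s t) k0.+1 by apply: A_pos => //; case: Hk0; tauto.
have Hp0 : 0 <= A (cst m s t) k0 by apply: A_pos => //; case: Hk0 => [|H]; [tauto|right; exact: ltnW].
have Hpx : forall r, (r == s) || (r == t) -> pos (act x (alpha r)).
  move=> r Hr; apply: (IHn (len x)) => //; exact: Hxasc.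
have -> : act x (fun r => A (cst m s t) k0.+1 * alpha (if odd k0 then t else s) r +
                          A (cst m s t) k0 * alpha (if odd k0 then s else t) r) =
  vadd (vscale (A (cst m s t) k0.+1) (act x (alpha (if odd k0 then t else s))))
       (vscale (A (cst m s t) k0) (act x (alpha (if odd k0 then s else t)))).
  by rewrite -act_scale -act_scale -act_add.
apply: pos_comb => //; apply: Hpx; by case: (odd k0); rewrite eqxx ?orbT.
Qed.

End Root.

Section Cone.
Variable T : finType.
Variable m : T -> T -> nat.
Hypothesis hm : coxeter_matrix m.
Local Notation len := (len m).
Local Notation act := (act m).
Local Notation coxeq := (coxeq m).
Local Open Scope R_scope.

Definition zv : vec T := fun _ => 0.

Lemma act_zero w : act w zv = zv.
Proof.
have -> : zv = vscale 0 zv by apply: functional_extensionality => r; rewrite /vscale /zv; lra.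
rewrite act_scale; apply: functional_extensionality => r; rewrite /vscale /zv; lra.
Qed.

Lemma act_nonzero w s : exists r, act w (alpha s) r <> 0.
Proof.
apply: NNPP => H.
have E : act w (alpha s) = zv.
  apply: functional_extensionality => r; apply: NNPP => H1; apply: H; by exists r.
have := act_rev_cancel m w (alpha s); rewrite E act_zero => E2.
have := congr1 (fun f => f s) E2; rewrite /zv /alpha eqxx; lra.
Qed.

Lemma sigma_alpha s : sigma m s (alpha s) = vscale (-1) (alpha s).
Proof.
apply: functional_extensionality => r; rewrite /sigma /vscale phi_alpha Bm_ss; lra.
Qed.

Lemma neg_desc w s : ~~ (len w < len (w ++ [:: s]))%N -> neg (act w (alpha s)).
Proof.
move=> Hd; set w' := w ++ [:: s].
have H1 : len (w' ++ [:: s]) = len w by apply: len_coxeq; exact: coxeq_sq_r.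
have Ha : (len w' < len (w' ++ [:: s]))%N by rewrite H1 -(len_desc_eq Hd).
have P := root_pos hm (erefl _) Ha.
rewrite -(act_coxeq hm (coxeq_sq_r m w s)) act_cat /= sigma_alpha act_scale.
move=> r; have := P r; rewrite /vscale /w'; lra.
Qed.

Lemma pos_neg_zero (x : vec T) : pos x -> neg x -> forall r, x r = 0.
Proof. move=> H1 H2 r; have := H1 r; have := H2 r; lra. Qed.

Lemma asc_of_pos w s : pos (act w (alpha s)) -> (len w < len (w ++ [:: s]))%N.
Proof.
move=> P; apply/negPn/negP => Hd; have N := neg_desc Hd.
have [r Hr] := act_nonzero w s; apply: Hr; exact: pos_neg_zero.
Qed.

Lemma desc_of_neg w s : neg (act w (alpha s)) -> ~~ (len w < len (w ++ [:: s]))%N.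
Proof.
move=> N; apply/negP => Ha; have P := root_pos hm (erefl _) Ha.
have [r Hr] := act_nonzero w s; apply: Hr; exact: pos_neg_zero.
Qed.

Definition supp (Y : {set T}) (x : vec T) := forall r, r \notin Y -> x r = 0.

Lemma act_supp (Y : {set T}) (y : seq T) x : all (fun r => r \in Y) y -> supp Y x -> supp Y (act y x).
Proof.
elim: y => //= q y IH /andP [Hq Hy] Hx r Hr.
rewrite /sigma IH // /alpha; case: eqP => [E|_]; last lra.
by rewrite -E (negbTE Hr) in Hq.
Qed.

Lemma supp_alpha (Y : {set T}) q : q \in Y -> supp Y (alpha q).
Proof. move=> Hq r Hr; rewrite /alpha; case: eqP => // E; by rewrite E Hq in Hr. Qed.

Lemma cone (Q : vec T -> Prop) u (Y : {set T}) x :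
  Q zv -> (forall a b, Q a -> Q b -> Q (vadd a b)) ->
  (forall k a, 0 <= k -> Q a -> Q (vscale k a)) ->
  (forall q, q \in Y -> Q (act u (alpha q))) -> supp Y x -> pos x -> Q (act u x).
Proof.
move=> Q0 Qadd Qsc Qa.
suff H : forall (l : seq T) x, (forall r, r \notin l -> x r = 0) -> supp Y x -> pos x -> Q (act u x).
  move=> HY Hp; apply: (H (enum T)) => // r; by rewrite mem_enum.
elim=> [|q l IH] {}x Hl HY Hp.
  have -> : x = zv by apply: functional_extensionality => r; exact: Hl.
  by rewrite act_zero.
set x' := fun r => if r == q then 0 else x r.
have -> : x = vadd (vscale (x q) (alpha q)) x'.
  apply: functional_extensionality => r; rewrite /vadd /vscale /alpha /x'.
  case: eqP => [->|_]; lra.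
rewrite act_add act_scale; apply: Qadd.
- case: (boolP (q \in Y)) => Hq.
    apply: Qsc; [exact: Hp | exact: Qa].
  have -> : vscale (x q) (act u (alpha q)) = zv.
    apply: functional_extensionality => r; rewrite /vscale /zv (HY q Hq); lra.
  exact: Q0.
- apply: IH.
  + move=> r Hr; rewrite /x'; case: eqP => // Hrq; apply: Hl.
    by rewrite in_cons negb_or Hr andbT; apply/eqP.
  + move=> r Hr; rewrite /x'; case: eqP => // _; exact: HY.
  + move=> r; rewrite /x'; case: eqP => _; [lra | exact: Hp].
Qed.

Lemma cone_pos u (Y : {set T}) x : (forall q, q \in Y -> pos (act u (alpha q))) -> supp Y x -> pos x -> pos (act u x).
Proof.
apply: cone.
- move=> r; rewrite /zv; lra.
- move=> a b Ha Hb r; have := Ha r; have := Hb r; rewrite /vadd; lra.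
- move=> k a Hk Ha r; have := Ha r; rewrite /vscale; nra.
Qed.

Lemma cone_neg u (Y : {set T}) x : (forall q, q \in Y -> neg (act u (alpha q))) -> supp Y x -> pos x -> neg (act u x).
Proof.
apply: cone.
- move=> r; rewrite /zv; lra.
- move=> a b Ha Hb r; have := Ha r; have := Hb r; rewrite /vadd; lra.
- move=> k a Hk Ha r; have := Ha r; rewrite /vscale; nra.
Qed.

Lemma neg_flip (x : vec T) : neg x -> pos (vscale (-1) x).
Proof. move=> H r; have := H r; rewrite /vscale; lra. Qed.
Lemma supp_flip (Y : {set T}) x : supp Y x -> supp Y (vscale (-1) x).
Proof. move=> H r Hr; rewrite /vscale H //; lra. Qed.
Lemma act_flip u x : act u (vscale (-1) x) = vscale (-1) (act u x).
Proof. exact: act_scale. Qed.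

Lemma K_plus u (Y : {set T}) : (forall r, r \in Y -> (len u < len (u ++ [:: r]))%N) ->
  forall y, all (fun r => r \in Y) y -> len (u ++ y) = (len u + len y)%N.
Proof.
move=> Hu; elim/last_ind => [|y r IH]; first by rewrite cats0 len_nil addn0.
rewrite all_rcons => /andP [Hr Hy]; have {}IH := IH Hy.
have Hpu : forall q, q \in Y -> pos (act u (alpha q)).
  move=> q Hq; exact: (root_pos hm (erefl _) (Hu q Hq)).
have Hs : supp Y (act y (alpha r)) by apply: act_supp => //; exact: supp_alpha.
rewrite -cats1 catA.
case: (boolP (len y < len (y ++ [:: r]))%N) => Ha.
- have P := root_pos hm (erefl _) Ha.
  have P2 : pos (act (u ++ y) (alpha r)) by rewrite act_cat; exact: cone_pos Hs P.
  rewrite (len_asc_eq (asc_of_pos P2)) (len_asc_eq Ha) IH; by rewrite addnS.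
- have N := neg_desc Ha.
  have N2 : neg (act (u ++ y) (alpha r)).
    rewrite act_cat => q; have := cone_pos Hpu (supp_flip Hs) (neg_flip N) q.
    rewrite act_flip /vscale; lra.
  have E1 := len_desc_eq (desc_of_neg N2); have E2 := len_desc_eq Ha.
  rewrite IH -E2 in E1; rewrite addnS in E1; by case: E1.
Qed.

Lemma K_minus v (Y : {set T}) : (forall r, r \in Y -> ~~ (len v < len (v ++ [:: r]))%N) ->
  forall y, all (fun r => r \in Y) y -> (len (v ++ y) + len y)%N = len v.
Proof.
move=> Hv; elim/last_ind => [|y r IH]; first by rewrite cats0 len_nil addn0.
rewrite all_rcons => /andP [Hr Hy]; have {}IH := IH Hy.
have Hnv : forall q, q \in Y -> neg (act v (alpha q)).
  move=> q Hq; exact: (neg_desc (Hv q Hq)).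
have Hs : supp Y (act y (alpha r)) by apply: act_supp => //; exact: supp_alpha.
rewrite -cats1 catA.
case: (boolP (len y < len (y ++ [:: r]))%N) => Ha.
- have P := root_pos hm (erefl _) Ha.
  have N2 : neg (act (v ++ y) (alpha r)) by rewrite act_cat; exact: cone_neg Hs P.
  have E1 := len_desc_eq (desc_of_neg N2).
  rewrite (len_asc_eq Ha) -IH -E1; by rewrite addnS addSn.
- have N := neg_desc Ha.
  have P2 : pos (act (v ++ y) (alpha r)).
    rewrite act_cat => q; have := cone_neg Hnv (supp_flip Hs) (neg_flip N) q.
    rewrite act_flip /vscale; lra.
  have E1 := len_asc_eq (asc_of_pos P2); have E2 := len_desc_eq Ha.
  rewrite E1 -IH -E2; by rewrite addnS addSn.
Qed.

End Cone.

Section Comb.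
Variable T : finType.
Variable m : T -> T -> nat.
Hypothesis hm : coxeter_matrix m.
Local Notation len := (len m).
Local Notation coxeq := (coxeq m).
Local Notation inWX := (inWX m).

Lemma coxeq_rev (u v : seq T) : coxeq u v -> coxeq (rev u) (rev v).
Proof.
move=> H.
have H1 : coxeq (rev u) (rev u ++ (v ++ rev v)).
  rewrite -{1}(cats0 (rev u)); apply: coxeq_catl; apply: coxeq_sym; exact: coxeq_rev_cancel.
apply: coxeq_trans H1 _; rewrite catA.
have E : coxeq (rev u ++ v) [::].
  apply: coxeq_trans (coxeq_catl _ (coxeq_sym H)) _; exact: coxeq_rev_cancel'.
exact: (coxeq_catr (rev v) E).
Qed.

Lemma inWX_coxeq (X : {set T}) u v : coxeq u v -> inWX X u -> inWX X v.
Proof. move=> H [w [H1 H2]]; exists w; split=> //; apply: coxeq_trans H1; exact: coxeq_sym. Qed.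

Lemma inWX_cat (X : {set T}) u v : inWX X u -> inWX X v -> inWX X (u ++ v).
Proof. move=> [u0 [H1 H2]] [v0 [H3 H4]]; exists (u0 ++ v0); split; [exact: coxeq_cat | by rewrite all_cat H2 H4]. Qed.

Lemma inWX_rev (X : {set T}) u : inWX X u -> inWX X (rev u).
Proof. move=> [u0 [H1 H2]]; exists (rev u0); split; [exact: coxeq_rev | by rewrite all_rev]. Qed.

Lemma inWX_nil (X : {set T}) : inWX X [::].
Proof. exists [::]; split=> //; exact: coxeq_refl. Qed.

Lemma inWX_word (X : {set T}) u : all (fun r => r \in X) u -> inWX X u.
Proof. by move=> H; exists u; split=> //; exact: coxeq_refl. Qed.

Lemma inWX_sub (X Y : {set T}) u : X \subset Y -> inWX X u -> inWX Y u.
Proof.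
move=> S [u0 [H1 H2]]; exists u0; split=> //; apply/allP => r Hr.
move/allP: H2 => /(_ r Hr); exact: (subsetP S).
Qed.

Definition canon (w : seq T) : seq T :=
  epsilon (inhabits [::]) (fun v => coxeq w v /\ size v = len w).

Lemma canon_spec w : coxeq w (canon w) /\ size (canon w) = len w.
Proof. exact: (epsilon_spec (inhabits [::]) (fun v => coxeq w v /\ size v = len w) (len_spec m w)). Qed.

Lemma canon_eq u v : coxeq u v -> canon u = canon v.
Proof.
move=> H; rewrite /canon (len_coxeq H); congr epsilon.
apply: functional_extensionality => x; apply: propositional_extensionality; split => -[H1 H2]; split=> //.
- apply: coxeq_trans H1; exact: coxeq_sym.
- exact: coxeq_trans H1.
Qed.

Lemma canon_len w : len (canon w) = len w.
Proof. apply/esym/len_coxeq; exact: (proj1 (canon_spec w)). Qed.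

Lemma canon_idem w : canon (canon w) = canon w.
Proof. apply/esym/canon_eq; exact: (proj1 (canon_spec w)). Qed.

Lemma canon_size x : canon x = x -> size x = len x.
Proof. by move=> H; rewrite -{1}H (proj2 (canon_spec x)). Qed.

Lemma coxeq_canon_eq x y : canon x = x -> canon y = y -> coxeq x y -> x = y.
Proof. by move=> Hx Hy H; rewrite -Hx -Hy; exact: canon_eq. Qed.

Lemma reducedE w : reduced m w <-> size w = len w.
Proof.
split.
- move=> H; apply/eqP; rewrite eqn_leq len_size andbT.
  have [v [H1 H2]] := len_spec m w; rewrite -H2; exact: H.
- by move=> H v Hv; rewrite H; exact: len_min.
Qed.

Definition words n : seq (seq T) := [seq val t | t <- enum {: n.-tuple T}].

Lemma mem_words n w : (w \in words n) = (size w == n).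
Proof.
apply/idP/idP.
- by move/mapP => [t _ ->]; rewrite size_tuple.
- move=> /eqP H; apply/mapP; exists (Tuple (introT eqP H)) => //; by rewrite mem_enum.
Qed.

Lemma uniq_words n : uniq (words n).
Proof. rewrite map_inj_uniq; [exact: enum_uniq | exact: val_inj]. Qed.

Definition RL (P : seq T -> bool) n := [seq x <- words n | (canon x == x) && P x].

Lemma mem_RL P n x : (x \in RL P n) = [&& size x == n, canon x == x & P x].
Proof. rewrite /RL mem_filter mem_words; by case: (size x == n); case: (canon x == x); case: (P x). Qed.

Lemma uniq_RL P n : uniq (RL P n).
Proof. apply: filter_uniq; exact: uniq_words. Qed.

Definition inWXb (X : {set T}) w := pb (inWX X w).

Lemma growth_RL (X : {set T}) n : growth m X n = size (RL (inWXb X) n).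
Proof.
rewrite /growth.
set cls := fun w : n.-tuple T => [set v : n.-tuple T | pb (coxeq (tval w) (tval v))].
set A := [set w : n.-tuple T | _].
set A' := [set w : n.-tuple T | (canon w == w) && inWXb X w].
have clsP : forall w v : n.-tuple T, (v \in cls w) = pb (coxeq w v) by move=> w v; rewrite inE.
have E : cls @: A = cls @: A'.
  apply/setP => c; apply/imsetP/imsetP => -[w Hw ->].
  - move: Hw; rewrite inE => /pbP [Hr Hin].
    have Hs : size (canon w) == n by rewrite (proj2 (canon_spec w)) -(proj1 (reducedE w) Hr) size_tuple.
    exists (Tuple Hs).
      rewrite inE /= canon_idem eqxx /=; apply/pbP; apply: inWX_coxeq Hin; exact: (proj1 (canon_spec w)).
    apply/setP => v; rewrite !clsP; apply/pbP/pbP => /= H.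
      apply: coxeq_trans H; exact: coxeq_sym (proj1 (canon_spec w)).
    exact: coxeq_trans (proj1 (canon_spec w)) H.
  - exists w => //; move: Hw; rewrite inE => /andP [/eqP Hc /pbP Hin]; rewrite inE; apply/pbP; split => //.
    apply/reducedE; exact: canon_size.
rewrite E card_in_imset; last first.
  move=> w1 w2; rewrite !inE => /andP [/eqP H1 _] /andP [/eqP H2 _] Hc; apply: val_inj.
  have : w2 \in cls w1 by rewrite Hc clsP; apply/pbP; exact: coxeq_refl.
  rewrite clsP => /pbP; apply: coxeq_canon_eq => //.
rewrite cardE.
have -> : size (enum A') = size (map val (enum A')) by rewrite size_map.
apply: perm_size; apply: uniq_perm.
- rewrite map_inj_uniq; [exact: enum_uniq | exact: val_inj].
- exact: uniq_RL.
- move=> x; rewrite mem_RL; apply/mapP/idP.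
  + move=> [t Ht ->]; rewrite mem_enum inE in Ht; by rewrite size_tuple eqxx.
  + move=> /and3P [/eqP Hs Hc Hp]; exists (Tuple (introT eqP Hs)) => //.
    by rewrite mem_enum inE /= Hc.
Qed.

End Comb.

Section Prod.
Variable T : finType.
Variable m : T -> T -> nat.
Hypothesis hm : coxeter_matrix m.
Local Notation len := (len m).
Local Notation coxeq := (coxeq m).
Local Notation inWX := (inWX m).
Local Notation canon := (canon m).
Local Notation RL := (RL m).
Local Notation inWXb := (inWXb m).

Definition ascb (Y : {set T}) (x : seq T) : bool := [forall r in Y, len x < len (x ++ [:: r])].

Lemma ascbP (Y : {set T}) x : reflect (forall r, r \in Y -> len x < len (x ++ [:: r])) (ascb Y x).
Proof. exact: forall_inP. Qed.

Lemma ascb_coxeq (Y : {set T}) u v : coxeq u v -> ascb Y u = ascb Y v.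
Proof.
move=> H; apply/ascbP/ascbP => H1 r Hr.
- by rewrite -(len_coxeq H) -(len_coxeq (coxeq_catr [:: r] H)); exact: H1.
- by rewrite (len_coxeq H) (len_coxeq (coxeq_catr [:: r] H)); exact: H1.
Qed.

Lemma len_cat_asc (Y : {set T}) a b : ascb Y a -> inWX Y b -> len (a ++ b) = len a + len b.
Proof.
move=> /ascbP Ha [y [Hy Hyw]].
rewrite (len_coxeq (coxeq_catl a Hy)) (len_coxeq Hy); exact: (K_plus hm Ha Hyw).
Qed.

Lemma len_nil0 w : len w = 0 -> coxeq w [::].
Proof. exact: len0. Qed.

Lemma decomp_unique (Y : {set T}) a a' b b' : ascb Y a -> ascb Y a' -> inWX Y b -> inWX Y b' ->
  coxeq (a ++ b) (a' ++ b') -> coxeq a a' /\ coxeq b b'.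
Proof.
move=> Ha Ha' Hb Hb' H.
have key : forall a a' b b', ascb Y a -> ascb Y a' -> inWX Y b -> inWX Y b' ->
    coxeq (a ++ b) (a' ++ b') -> coxeq a (a' ++ (b' ++ rev b)) /\ len a = len a' + len (b' ++ rev b).
  move=> a1 a1' b1 b1' H1 H1' Hb1 Hb1' E.
  have C : coxeq a1 (a1' ++ (b1' ++ rev b1)).
    have : coxeq a1 ((a1 ++ b1) ++ rev b1).
      rewrite -catA -{1}(cats0 a1); apply: coxeq_catl; apply: coxeq_sym; exact: coxeq_rev_cancel.
    move=> C1; apply: coxeq_trans C1 _; rewrite catA; exact: coxeq_catr.
  split=> //; rewrite (len_coxeq C); apply: len_cat_asc H1' _.
  apply: inWX_cat Hb1' _; exact: inWX_rev.
have [C1 L1] := key _ _ _ _ Ha Ha' Hb Hb' H.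
have [C2 L2] := key _ _ _ _ Ha' Ha Hb' Hb (coxeq_sym H).
have Z : len (b' ++ rev b) = 0.
  move: L1 L2 => ->; rewrite -addnA -[X in X = _]addn0 => /eqP; rewrite eqn_add2l eq_sym addn_eq0.
  by case/andP => /eqP.
have Ca : coxeq a a'.
  apply: coxeq_trans C1 _; rewrite -{2}(cats0 a'); apply: coxeq_catl; exact: len0 Z.
split => //.
have E1 : coxeq (rev a ++ (a ++ b)) (rev a ++ (a ++ b')).
  apply: coxeq_catl; apply: coxeq_trans H _; apply: coxeq_catr; exact: coxeq_sym.
rewrite !catA in E1.
have E2 := coxeq_rev_cancel' m a.
have E3 : coxeq b ((rev a ++ a) ++ b) by exact: (coxeq_catr b (coxeq_sym E2)).
apply: coxeq_trans E3 _; apply: coxeq_trans E1 _; exact: (coxeq_catr b' E2).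
Qed.

Lemma decomp_exists (Y : {set T}) x : exists a b, [/\ coxeq x (a ++ b), ascb Y a & inWX Y b].
Proof.
have Ex : exists k, pb (exists a b, [/\ coxeq x (a ++ b), inWX Y b & len a = k]).
  exists (len x); apply/pbP; exists x, [::]; split; [rewrite cats0; exact: coxeq_refl | exact: inWX_nil | by []].
case: (ex_minnP Ex) => k /pbP [a [b [H1 H2 H3]]] Hmin.
exists a, b; split => //; apply/ascbP => r Hr; apply/negPn/negP => Hd.
have Hd' := len_desc_eq Hd.
have : (k <= len (a ++ [:: r]))%N.
  apply: Hmin; apply/pbP; exists (a ++ [:: r]), (r :: b); split => //.
  - apply: coxeq_trans H1 _; rewrite -catA /=; apply: coxeq_sym.
    have := coxeq_sq m a b r; by [].
  - have Hr1 : inWX Y [:: r] by apply: inWX_word; rewrite /= Hr.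
    exact: (inWX_cat Hr1 H2).
by rewrite -H3 -Hd' ltnn.
Qed.

Definition BL (X Y : {set T}) n := RL (fun x => inWXb X x && ascb Y x) n.

Lemma uniq_flatten_sizes (f : nat -> seq (seq T)) k j :
  (forall i, uniq (f i)) -> (forall i x, x \in f i -> size x = i) ->
  uniq (flatten [seq f i | i <- iota k j]).
Proof.
move=> Hu Hs; elim: j k => [|j IH] k //=.
rewrite cat_uniq Hu IH andbT /=; apply/hasPn => x /flattenP [s /mapP [i Hi ->] Hx].
apply/negP => Hk; move: Hi; rewrite -(Hs _ _ Hx) (Hs _ _ Hk) mem_iota ltnn; by [].
Qed.

Lemma sum_const_seq (s : seq (seq T)) (c : nat) : \sum_(a <- s) c = (size s * c)%N.
Proof. by elim: s => [|a s IH]; rewrite ?big_nil ?big_cons ?IH ?mulSn. Qed.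

Theorem growth_prod (X Y : {set T}) n : Y \subset X ->
  growth m X n = \sum_(i < n.+1) size (BL X Y i) * growth m Y (n - i).
Proof.
move=> YX; rewrite growth_RL.
set Aall := flatten [seq BL X Y i | i <- iota 0 n.+1].
set L := [seq canon (a ++ b) | a <- Aall, b <- RL (inWXb Y) (n - size a)].
have HBs : forall i x, x \in BL X Y i -> size x = i by move=> i x; rewrite mem_RL => /andP [/eqP].
have HA : forall a, a \in Aall -> [/\ (size a <= n)%N, canon a = a, inWX X a & ascb Y a].
  move=> a /flattenP [s /mapP [i Hi ->]]; rewrite mem_RL => /and3P [/eqP Hs /eqP Hc /andP [/pbP H1 H2]].
  by split => //; rewrite Hs; move: Hi; rewrite mem_iota.
have UA : uniq Aall by apply: uniq_flatten_sizes => //; move=> i; exact: uniq_RL.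
have P : perm_eq (RL (inWXb X) n) L.
  apply: uniq_perm; first exact: uniq_RL.
  - apply: (@allpairs_uniq_dep _ (fun _ => seq T)) => //; first by move=> a _; exact: uniq_RL.
    move=> [a1 b1] [a2 b2] /allpairsPdep [a1' [b1' [Ha1 Hb1 [E1 E2]]]] /allpairsPdep [a2' [b2' [Ha2 Hb2 [E3 E4]]]].
    subst a1' a2'; rewrite /= in E2 E4 *; subst b1' b2' => /= Hc.
    have [_ Hc1 HX1 HY1] := HA _ Ha1; have [_ Hc2 HX2 HY2] := HA _ Ha2.
    move: Hb1 Hb2; rewrite !mem_RL => /and3P [_ /eqP Hcb1 /pbP Hb1] /and3P [_ /eqP Hcb2 /pbP Hb2].
    have C : coxeq (a1 ++ b1) (a2 ++ b2).
      apply: coxeq_trans (proj1 (canon_spec m (a1 ++ b1))) _; rewrite Hc.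
      exact: coxeq_sym (proj1 (canon_spec m (a2 ++ b2))).
    have [Ca Cb] := decomp_unique HY1 HY2 Hb1 Hb2 C.
    have Ea := coxeq_canon_eq Hc1 Hc2 Ca; subst a2.
    have Eb := coxeq_canon_eq Hcb1 Hcb2 Cb; by subst b2.
  - move=> x; apply/idP/allpairsPdep.
    + rewrite mem_RL => /and3P [/eqP Hs /eqP Hc /pbP Hx].
      have [a [b [Cx Ha Hb]]] := decomp_exists Y x.
      have Hlx : len x = n by rewrite -Hs -(canon_size Hc).
      have Hl := len_cat_asc Ha Hb; rewrite -(len_coxeq Cx) Hlx in Hl.
      exists (canon a), (canon b); split.
      * apply/flattenP; exists (BL X Y (len a)).
          apply/mapP; exists (len a) => //; by rewrite mem_iota /= add0n ltnS Hl leq_addr.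
        rewrite mem_RL (proj2 (canon_spec m a)) eqxx canon_idem eqxx /=.
        rewrite -(ascb_coxeq _ (proj1 (canon_spec m a))) Ha andbT; apply/pbP.
        apply: inWX_coxeq (proj1 (canon_spec m a)) _.
        have Ca : coxeq (x ++ rev b) a.
          apply: coxeq_trans (coxeq_catr _ Cx) _; rewrite -catA -{2}(cats0 a); apply: coxeq_catl.
          exact: coxeq_rev_cancel.
        apply: inWX_coxeq Ca _; apply: inWX_cat Hx _; apply: inWX_rev; exact: inWX_sub YX Hb.
      * rewrite mem_RL canon_idem eqxx (proj2 (canon_spec m b)) (proj2 (canon_spec m a)) Hl addKn eqxx /=.
        apply/pbP; apply: inWX_coxeq Hb; exact: (proj1 (canon_spec m b)).
      * rewrite -Hc; apply: canon_eq; apply: coxeq_trans Cx _.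
        apply: coxeq_cat; exact: (proj1 (canon_spec m _)).
    + move=> [a [b [Ha Hb ->]]].
      have [Hsa Hca HXa HYa] := HA _ Ha.
      move: Hb; rewrite mem_RL => /and3P [/eqP Hsb /eqP Hcb /pbP Hb].
      rewrite mem_RL canon_idem eqxx (proj2 (canon_spec m _)) (len_cat_asc HYa Hb).
      rewrite -(canon_size Hca) -(canon_size Hcb) Hsb subnKC // eqxx /=.
      apply/pbP; apply: inWX_coxeq (proj1 (canon_spec m _)) _; apply: inWX_cat HXa _.
      exact: inWX_sub YX Hb.
rewrite (perm_size P) size_allpairs_dep sumnE (big_map (fun x => size (RL (inWXb Y) (n - size x))) xpredT (fun i => i)).
rewrite /Aall big_flatten big_map.
rewrite -(big_mkord xpredT (fun i => size (BL X Y i) * growth m Y (n - i))) /index_iota subn0.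
apply: eq_big_seq => i Hi; rewrite growth_RL.
rewrite (eq_big_seq (fun _ => size (RL (inWXb Y) (n - i)))); first exact: sum_const_seq.
by move=> a /HBs ->.
Qed.

End Prod.

Import GRing.Theory.

Section IE.
Variable T : finType.
Variable m : T -> T -> nat.
Hypothesis hm : coxeter_matrix m.
Local Notation len := (len m).
Local Notation coxeq := (coxeq m).
Local Notation inWX := (inWX m).
Local Notation canon := (canon m).
Local Notation RL := (RL m).
Local Notation inWXb := (inWXb m).
Local Notation BL := (BL m).
Local Notation ascb := (ascb m).

Lemma desc_finite (X : {set T}) v : (forall r, r \in X -> ~~ (len v < len (v ++ [:: r]))) -> WX_finite m X.
Proof.
move=> Hv; exists (flatten [seq words T k | k <- iota 0 (len v).+1]) => w [y [Cy Hy]].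
exists (canon w); last exact: (proj1 (canon_spec m w)).
have Hk := K_minus hm Hv Hy.
apply/flattenP; exists (words T (size (canon w))); last by rewrite mem_words.
apply/mapP; exists (size (canon w)) => //; rewrite mem_iota /= add0n ltnS.
rewrite (proj2 (canon_spec m w)) (len_coxeq Cy) -Hk; exact: leq_addl.
Qed.

Lemma len_single (r : T) : len [:: r] = 1%N.
Proof.
have := len_odd m [:: r]; have := len_size m [:: r]; rewrite /=.
by case: (len [:: r]) => [|[|k]].
Qed.

Lemma BL_self (X : {set T}) n : size (BL X X n) = (n == 0)%N.
Proof.
have H0 : forall x, x \in BL X X n -> x = [::] /\ n = 0%N.
  move=> x; rewrite mem_RL => /and3P [/eqP Hs /eqP Hc /andP [/pbP Hx Ha]].
  have [y [Cy Hy]] := inWX_rev Hx.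
  have := len_cat_asc hm Ha (inWX_word m Hy).
  have C : coxeq (x ++ y) [::].
    apply: coxeq_trans (coxeq_catl _ (coxeq_sym Cy)) _; exact: coxeq_rev_cancel.
  rewrite (len_coxeq C) len_nil => /esym /eqP; rewrite addn_eq0 => /andP [/eqP Hl _].
  have Hs0 : size x = 0%N by rewrite (canon_size Hc) Hl.
  by split; [exact: size0nil | rewrite -Hs].
case: n H0 => [|n] H0.
- have Hm : [::] \in BL X X 0.
    rewrite mem_RL /= .
    have Hc : canon [::] = [::] by apply: size0nil; rewrite (proj2 (canon_spec m [::])) len_nil.
    rewrite Hc eqxx /=; apply/andP; split; first by apply/pbP; exact: inWX_nil.
    apply/ascbP => r _; by rewrite /= len_single len_nil.
  have : perm_eq (BL X X 0) [:: [::]].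
    apply: uniq_perm => //; first exact: uniq_RL.
    move=> x; rewrite inE; apply/idP/eqP; first by move/H0 => [].
    by move=> ->.
  by move/perm_size.
- case E: (BL X X n.+1) => [//|x l]; have := H0 x; rewrite E mem_head => /(_ isT) [_] //.
Qed.

Local Open Scope ring_scope.

Lemma altsum (A : {set T}) : A != set0 -> \sum_(Y : {set T} | Y \subset A) (-1) ^+ #|Y| = 0 :> rat.
Proof.
case/set0Pn => a Ha.
rewrite (bigID (fun Y : {set T} => a \in Y)) /=.
rewrite (reindex_onto (fun Z : {set T} => a |: Z) (fun Y : {set T} => Y :\ a)) /=; last first.
  by move=> Y /andP [_ HY]; rewrite setD1K.
set S1 := \sum_(_ | _) _; set S2 := \sum_(_ | _) _.
have -> : S1 = \sum_(Z : {set T} | (Z \subset A) && (a \notin Z)) (- (-1) ^+ #|Z|).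
  rewrite /S1; apply: eq_big => Z.
  - rewrite subUset sub1set Ha setU11 /= andbT.
    apply/idP/idP.
    + move=> /andP [HZ /eqP E]; rewrite HZ /= -E; by rewrite setD11.
    + move=> /andP [HZ HaZ]; rewrite HZ /= setU1K //.
  - move=> /andP [_ /eqP E]; have HaZ : a \notin Z by rewrite -E setD11.
    by rewrite cardsU1 HaZ /= add1n exprS mulN1r.
by rewrite /S2 sumrN addNr.
Qed.

Lemma count_nat (P : pred (seq T)) l : (count P l)%:R = \sum_(x <- l) (P x)%:R :> rat.
Proof. elim: l => [|x l IH]; first by rewrite big_nil. by rewrite big_cons /= natrD IH. Qed.

Lemma size_BL (X Y : {set T}) n : size (BL X Y n) = count (ascb Y) (RL (inWXb X) n).
Proof.
rewrite size_filter /RL count_filter; apply: eq_count => x /=.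
by case: (canon x == x); case: (inWXb X x); case: (ascb Y x).
Qed.

Theorem incl_excl (X : {set T}) n : ~ WX_finite m X ->
  \sum_(Y : {set T} | Y \subset X) (-1) ^+ #|Y| * (size (BL X Y n))%:R = 0 :> rat.
Proof.
move=> Hinf.
under eq_bigr => Y _ do rewrite size_BL count_nat big_distrr /=.
rewrite exchange_big /=; apply: big1_seq => x /andP [_ Hx].
set Ax := [set r | (len x < len (x ++ [:: r]))%N].
have Hne : X :&: Ax != set0.
  apply/negP => /eqP E; apply: Hinf; apply: (@desc_finite X x) => r Hr.
  apply/negP => Hasc; have : r \in X :&: Ax by rewrite inE Hr inE Hasc.
  by rewrite E inE.
rewrite -[RHS](altsum Hne) big_mkcond [RHS]big_mkcond.
apply: eq_bigr => Y _; rewrite subsetI.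
have -> : ascb Y x = (Y \subset Ax).
  apply/ascbP/subsetP => H r Hr; [rewrite inE; exact: H | have := H r Hr; by rewrite inE].
by case: (Y \subset X); case: (Y \subset Ax); rewrite /= ?mulr1 ?mulr0.
Qed.

End IE.

Import GRing.Theory.
Local Open Scope ring_scope.

Definition peqn n (p q : {poly rat}) := forall i, (i <= n)%N -> p`_i = q`_i.

Lemma peqn_mul n (p p' q : {poly rat}) : peqn n p p' -> peqn n (p * q) (p' * q).
Proof.
move=> H i Hi; rewrite !coefM; apply: eq_bigr => j _; rewrite H //.
apply: leq_trans Hi; rewrite -ltnS; exact: ltn_ord.
Qed.

Lemma peqn_mulr n (p q q' : {poly rat}) : peqn n q q' -> peqn n (p * q) (p * q').
Proof. by move=> H; rewrite ![p * _]mulrC; exact: peqn_mul. Qed.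

Lemma peqn_trans n (p q r : {poly rat}) : peqn n p q -> peqn n q r -> peqn n p r.
Proof. by move=> H1 H2 i Hi; rewrite H1 // H2. Qed.

Lemma peqn_sym n (p q : {poly rat}) : peqn n p q -> peqn n q p.
Proof. by move=> H i Hi; rewrite H. Qed.

Lemma peqn_refl n (p : {poly rat}) : peqn n p p.
Proof. by []. Qed.

Lemma peqn_sum n (I : Type) (r : seq I) (P : pred I) (F G : I -> {poly rat}) :
  (forall i, P i -> peqn n (F i) (G i)) -> peqn n (\sum_(i <- r | P i) F i) (\sum_(i <- r | P i) G i).
Proof. move=> H i Hi; rewrite !coef_sum; apply: eq_bigr => j Hj; exact: H. Qed.

Lemma peqn_scale n c (p q : {poly rat}) : peqn n p q -> peqn n (c *: p) (c *: q).
Proof. by move=> H i Hi; rewrite !coefZ H. Qed.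

Lemma peqn_opp n (p q : {poly rat}) : peqn n p q -> peqn n (- p) (- q).
Proof. by move=> H i Hi; rewrite !coefN H. Qed.

Section Series.
Variable T : finType.
Variable m : T -> T -> nat.
Hypothesis hm : coxeter_matrix m.

Definition Wt n (X : {set T}) : {poly rat} := \poly_(i < n.+1) (growth m X i)%:R.
Definition Bt n (X Y : {set T}) : {poly rat} := \poly_(i < n.+1) (size (BL m X Y i))%:R.

Lemma frac_eqn (X : {set T}) g L n : fraction_eq m X g L -> peqn n (eps X *: L) (g * Wt n X).
Proof.
move=> H i Hi; rewrite coefZ H coefM; apply: eq_bigr => j _; rewrite coef_poly.
have -> : (i - j < n.+1)%N by rewrite ltnS; apply: leq_trans (leq_subr _ _) Hi.
by [].
Qed.

Lemma eqn_frac (X : {set T}) g L : (forall n, peqn n (eps X *: L) (g * Wt n X)) -> fraction_eq m X g L.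
Proof.
move=> H n; have := H n n (leqnn n); rewrite coefZ => ->; rewrite coefM; apply: eq_bigr => j _.
rewrite coef_poly; have -> : (n - j < n.+1)%N by rewrite ltnS leq_subr.
by [].
Qed.

Lemma prod_eqn (X Y : {set T}) n : Y \subset X -> peqn n (Wt n X) (Bt n X Y * Wt n Y).
Proof.
move=> YX i Hi; rewrite coef_poly ltnS Hi (growth_prod hm i YX) natr_sum coefM.
apply: eq_bigr => j _; rewrite natrM !coef_poly.
have -> : (j < n.+1)%N by rewrite ltnS; apply: leq_trans Hi; rewrite -ltnS; exact: ltn_ord.
have -> : (i - j < n.+1)%N by rewrite ltnS; apply: leq_trans (leq_subr _ _) Hi.
by [].
Qed.

Lemma incl_excl_eqn (X : {set T}) n : ~ WX_finite m X ->
  peqn n (\sum_(Y : {set T} | Y \proper X) eps Y *: Bt n X Y) (- (eps X) *: 1).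
Proof.
move=> Hinf i Hi; rewrite coef_sum coefZ coef1.
have H := incl_excl hm i Hinf.
rewrite (bigD1 X) //= in H.
have -> : \sum_(Y : {set T} | Y \proper X) (eps Y *: Bt n X Y)`_i =
          \sum_(Y : {set T} | (Y \subset X) && (Y != X)) (-1) ^+ #|Y| * (size (BL m X Y i))%:R.
  apply: eq_big => Y; first by rewrite properEneq andbC.
  move=> _; rewrite coefZ coef_poly ltnS Hi /eps; by [].
move/eqP: H; rewrite addrC addr_eq0 => /eqP ->.
rewrite BL_self //; case: (i == 0%N); rewrite /eps /= ?mulr1 ?mulr0 ?oppr0 //.
Qed.

Theorem good (L : {poly rat}) : ~ WX_finite m [set: T] ->
  (forall Y : {set T}, Y \proper [set: T] -> WX_finite m Y -> exists P, poincare_poly m Y P /\ P %| L) ->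
  forall X : {set T}, X \proper [set: T] -> exists g, fraction_eq m X g L.
Proof.
move=> Hinf HL X.
elim: {X}#|X|.+1 {-2}X (ltnSn #|X|) => // k IH X HXk HX.
case: (classic (WX_finite m X)) => Hfin.
- have [P [HP HPL]] := HL X HX Hfin.
  have [Q EQ] := dvdpP _ _ HPL.
  exists (eps X *: Q) => n; rewrite EQ coefM big_distrr /=; apply: eq_bigr => j _.
  by rewrite coefZ HP mulrA.
- have IHY : forall Y : {set T}, Y \proper X -> exists g, fraction_eq m Y g L.
    move=> Y HY; apply: IH; last exact: proper_trans HY HX.
    by apply: leq_trans (proper_card HY) _; rewrite -ltnS.
  pose gY := fun Y : {set T} => epsilon (inhabits 0) (fun g => fraction_eq m Y g L).
  have HgY : forall Y : {set T}, Y \proper X -> fraction_eq m Y (gY Y) L.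
    move=> Y HY; exact: (epsilon_spec (inhabits 0) (fun g => fraction_eq m Y g L) (IHY Y HY)).
  exists (- \sum_(Y : {set T} | Y \proper X) gY Y); apply: eqn_frac => n.
  have S1 : peqn n (\sum_(Y : {set T} | Y \proper X) (eps Y *: L) * Bt n X Y)
                  (\sum_(Y : {set T} | Y \proper X) gY Y * Wt n X).
    apply: peqn_sum => Y HY.
    have F := frac_eqn (n := n) (HgY Y HY); apply: peqn_trans (peqn_mul _ F) _.
    rewrite -mulrA [Wt n Y * _]mulrC; apply: peqn_mulr; apply: peqn_sym; apply: prod_eqn.
    exact: proper_sub HY.
  have E1 : \sum_(Y : {set T} | Y \proper X) (eps Y *: L) * Bt n X Y =
            L * \sum_(Y : {set T} | Y \proper X) eps Y *: Bt n X Y.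
    rewrite mulr_sumr; apply: eq_bigr => Y _; by rewrite -scalerAl scalerAr mulrC.
  rewrite E1 -mulr_suml in S1.
  have S2 := peqn_mulr L (@incl_excl_eqn X n Hfin).
  have S3 := peqn_trans (peqn_sym S2) S1.
  rewrite mulNr; apply: peqn_trans (peqn_opp S3); move=> i Hi.
  by rewrite -scalerAr mulr1 coefN !coefZ mulNr opprK.
Qed.

End Series.

Import GRing.Theory.
Local Open Scope ring_scope.

Section Final.
Variable T : finType.
Variable m : T -> T -> nat.
Hypothesis hm : coxeter_matrix m.

Lemma canon_nil : canon m [::] = [::].
Proof. apply: size0nil; by rewrite (proj2 (canon_spec m [::])) len_nil. Qed.

Lemma growth0 (X : {set T}) : growth m X 0 = 1%N.
Proof.
rewrite growth_RL.
have : perm_eq (RL m (inWXb m X) 0) [:: [::]].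
  apply: uniq_perm => //; first exact: uniq_RL.
  move=> x; rewrite inE mem_RL; apply/idP/eqP.
  - by move=> /and3P [/eqP /size0nil -> _ _].
  - move=> ->; rewrite /= canon_nil eqxx /=; apply/pbP; exact: inWX_nil.
by move/perm_size.
Qed.

Lemma poincare_exists (X : {set T}) : WX_finite m X -> exists P, poincare_poly m X P.
Proof.
move=> [s Hs]; set N := \max_(v <- s) size v.
have H0 : forall i, (N < i)%N -> growth m X i = 0%N.
  move=> i Hi; rewrite growth_RL; apply/eqP; rewrite size_eq0; apply/eqP.
  case E: (RL m (inWXb m X) i) => [//|x l]; exfalso.
  have : x \in RL m (inWXb m X) i by rewrite E mem_head.
  rewrite mem_RL => /and3P [/eqP Hsz /eqP Hc /pbP Hx].
  have [v Hv Cv] := Hs x Hx.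
  have : (len m x <= N)%N.
    apply: leq_trans (len_min Cv) _; rewrite /N; by apply: leq_bigmax_seq.
  by rewrite -(canon_size Hc) Hsz leqNgt Hi.
exists (\poly_(i < N.+1) (growth m X i)%:R) => i; rewrite coef_poly.
case: ltnP => // Hi; by rewrite H0.
Qed.

Lemma poincare_uniq (X : {set T}) P Q : poincare_poly m X P -> poincare_poly m X Q -> P = Q.
Proof. by move=> HP HQ; apply/polyP => i; rewrite HP HQ. Qed.

Lemma poincare_neq0 (X : {set T}) P : poincare_poly m X P -> P != 0.
Proof. move=> HP; apply/eqP => E; have := HP 0%N; by rewrite E coef0 growth0. Qed.

End Final.

Lemma lcm_exists (F : {poly rat} -> Prop) (M0 : {poly rat}) :
  M0 != 0 -> (forall p, F p -> p %| M0) -> exists L, is_monic_lcm F L.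
Proof.
move=> HM0 HF.
have Ex : exists k, pb (exists M : {poly rat}, [/\ M != 0, (forall p, F p -> p %| M) & size M = k]).
  exists (size M0); apply/pbP; by exists M0.
case: (ex_minnP Ex) => k /pbP [M [HM HMF HMk]] Hmin.
have Hl : lead_coef M != 0 by rewrite lead_coef_eq0.
have Hc : (lead_coef M)^-1 != 0 by rewrite invr_eq0.
exists ((lead_coef M)^-1 *: M); split.
- by rewrite monicE lead_coefZ mulVf.
- by move=> p Hp; rewrite dvdpZr // HMF.
- move=> N HN; rewrite dvdpZl //.
  case: (eqVneq (N %% M) 0) => [/modp_eq0P //|Hr].
  exfalso.
  have : (k <= size ((N %% M)%R))%N.
    apply: Hmin; apply/pbP; exists (N %% M); split => // p Hp.
    by rewrite -dvdp_mod ?HMF // HN.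
  by rewrite -HMk leqNgt ltn_modp HM.
Qed.

Theorem mainTheorem5 (T : finType) (m : T -> T -> nat)
  (hm : coxeter_matrix m) (hinf : ~ WX_finite m [set: T]) :
  exists L : {poly rat},
    is_monic_lcm (fun q => exists X : {set T},
                    X \proper [set: T] /\ irred_denom m X q) L
    /\ Virg m L.
Proof.
pose PX := fun X : {set T} => epsilon (inhabits (0 : {poly rat})) (poincare_poly m X).
have HPX : forall X, WX_finite m X -> poincare_poly m X (PX X).
  move=> X HX; exact: (epsilon_spec (inhabits (0 : {poly rat})) (poincare_poly m X) (poincare_exists HX)).
pose VF := fun P : {poly rat} => exists X : {set T}, [/\ X \proper [set: T], WX_finite m X & poincare_poly m X P].
pose M0 := \prod_(X : {set T} | pb (X \proper [set: T] /\ WX_finite m X)) PX X.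
have HM0 : M0 != 0.
  rewrite prodf_seq_neq0; apply/allP => X _; apply/implyP => /pbP [_ HX].
  exact: poincare_neq0 (HPX X HX).
have HVF : forall p, VF p -> p %| M0.
  move=> p [X [HXp HXf HXP]].
  rewrite (poincare_uniq HXP (HPX X HXf)) /M0 (bigD1 X) /=; first exact: dvdp_mulIl.
  by apply/pbP.
have [L [HLm HLdiv HLmin]] := lcm_exists HM0 HVF.
exists L; split; last exact: (And3 HLm HLdiv HLmin).
have Hgood := good hm hinf (fun Y HY HYf => ex_intro _ (PX Y) (conj (HPX Y HYf) (HLdiv _ (ex_intro _ Y (And3 HY HYf (HPX Y HYf)))))).
have Heps : forall X : {set T}, eps X != 0 by move=> X; rewrite /eps signr_eq0.
split => //.
- move=> q [X [HX [p [Hqm Hcop Hfr]]]].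
  have [g Hg] := Hgood X HX.
  have E : q * g = L * p.
    apply/polyP => n.
    have E1 := peqn_mul g (frac_eqn (n := n) Hfr).
    have E2 := peqn_mul p (frac_eqn (n := n) Hg).
    have := E1 n (leqnn n); have := E2 n (leqnn n).
    rewrite -!scalerAl !coefZ.
    have -> : g * Wt m n X * p = p * Wt m n X * g by rewrite [LHS]mulrC [g * _]mulrC mulrA.
    move=> H2 H1; apply: (mulfI (Heps X)); by rewrite H1 -H2.
  have : q %| L * p by rewrite -E dvdp_mulIl.
  by rewrite Gauss_dvdpl // coprimep_sym.
- move=> M HM; apply: HLmin => P [X [HX HXf HXP]].
  have HP0 := poincare_neq0 HXP.
  have Hl : lead_coef P != 0 by rewrite lead_coef_eq0.
  have Hc : (lead_coef P)^-1 != 0 by rewrite invr_eq0.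
  rewrite -(dvdpZl _ _ Hc); apply: HM; exists X; split => //.
  exists ((eps X * (lead_coef P)^-1) *: 1); split.
  + by rewrite monicE lead_coefZ mulVf.
  + rewrite coprimepZl ?coprime1p //; exact: mulf_neq0 (Heps X) Hc.
  + move=> n; rewrite big_ord_recl big1 ?addr0; last first.
      by move=> i _; rewrite coefZ coef1 /= mulr0 mul0r.
    rewrite !coefZ coef1 /= mulr1 subn0 HXP mulrA. by [].
Qed.
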